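(* Let $G=(V,E)$ be a finite simple graph and $T\geq1$ an integer. If $(x,y,z)$ is a feasible solution of the Time Step Model $\mathrm{TSM}(G,T)$, then $C=\{v\in V\colon x^0_v=1\}$ is a zero forcing set of $G$ that is the initial set of some zero forcing game in $\mathcal{Z}(G,T)$, and $\mathrm{pt}(G,C)=\sum_{t\in[T]}z^t$.
   Context: Zero forcing: $n=|V|$, $N(u)$ is the neighborhood of $u$, $d(u)=|N(u)|$. Under the standard color change rule, a filled vertex $u$ can force a non-filled vertex $v$ if $v$ is the only non-filled neighbor of $u$. A zero forcing game on $G$ with initial set $C\subseteq V$ consists of sets $C^{(0)}=C^{[0]}=C$, sets $C^{(t)}$ (vertices forced at step $t$) with $C^{[t]}=C^{[t-1]}\cup C^{(t)}$, and a collection $\phi(C)$ of forces $u\to v$, such that every vertex lies in exactly one $C^{(t)}$, and each $v\in C^{(t)}$, $t\geq1$, is forced by exactly one neighbor $u$ such that $u$ and all neighbors of $u$ other than $v$ lie in $C^{[t-1]}$. $C$ is a zero forcing set if repeated forcing eventually fills all of $V$. The propagation time $\mathrm{pt}(G,C)$ is the smallest $t^*$ with $C^{[t^*]}=V$ when at each step all possible forces are applied simultaneously, i.e. $C^{(t)}$ is the set of all $v\notin C^{[t-1]}$ for which some $u\in C^{[t-1]}$ has $v$ as its unique neighbor outside $C^{[t-1]}$ ($\mathrm{pt}(G,C)=\infty$ if $C$ is not a zero forcing set). Here $\mathcal{Z}(G,T)$ denotes the family of zero forcing games on $G$ whose initial set is a zero forcing set, which use at most $T$ time steps, and in which at each time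 step all possible forces are applied (in the sense just described). Time Step Model: $A$ is the set of arcs containing $(u,v)$ and $(v,u)$ for each edge $\{u,v\}$, $[T]=\{1,\dots,T\}$. $\mathrm{TSM}(G,T)$ has binary variables $x^t_v$ ($v\in V$, $t\in\{0,\dots,T\}$), $y^t_a$ ($a\in A$, $t\in[T]$), $z^t$ ($t\in[T]$), with constraints: (1) $x^0_v+\sum_{t\in[T]}\sum_{a=(u,v)\in A}y^t_a=1$ for all $v$; (2) $y^t_a\leq x^{t-1}_u$ for all $a=(u,v)\in A$, $t\in[T]$; (3) $y^t_a\leq x^{t-1}_w$ for all $a=(u,v)\in A$, $w\in N(u)\setminus\{v\}$, $t\in[T]$; (4) $x^t_v=x^{t-1}_v+\sum_{a=(u,v)\in A}y^t_a$ for all $v$, $t\in[T]$; (5) $x^{t-1}_u-x^{t-1}_v+\sum_{w\in N(u)\setminus\{v\}}x^{t-1}_w\leq\sum_{a=(w,v)\in A}y^t_a+d(u)-1$ for all $(u,v)\in A$, $t\in[T]$; (6) $\frac1n\sum_{v\in V}(x^t_v-x^{t-1}_v)-z^t\leq0$ for all $t\in[T]$; (7) $z^t-\sum_{v\in V}(x^t_v-x^{t-1}_v)\leq 0$ for all $t\in[T]$. Its objective is to minimize $\sum_v x^0_v$. A feasible solution is one satisfying all constraints. *)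

(* Defs.v *)
From mathcomp Require Import all_boot all_order all_algebra.
Set Implicit Arguments. Unset Strict Implicit. Unset Printing Implicit Defensive.
Import Order.TTheory GRing.Theory Num.Theory.

Definition simple_graph (V : finType) (e : rel V) : Prop :=
  symmetric e /\ irreflexive e.

Definition nbhd (V : finType) (e : rel V) (u : V) : {set V} := [set w | e u w].
Definition deg (V : finType) (e : rel V) (u : V) : nat := #|nbhd e u|.

Definition can_force (V : finType) (e : rel V) (S : {set V}) (u v : V) : bool :=
  [&& u \in S, e u v, v \notin S &
      [forall w, (w \in nbhd e u) && (w != v) ==> (w \in S)]].

Definition forced_step (V : finType) (e : rel V) (S : {set V}) : {set V} :=
  [set v | [exists u, can_force e S u v]].

Fixpoint filled (V : finType) (e : rel V) (C : {set V}) (t : nat) : {set V} :=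
  match t with
  | 0 => C
  | t'.+1 => filled e C t' :|: forced_step e (filled e C t')
  end.

Definition zero_forcing_set (V : finType) (e : rel V) (C : {set V}) : Prop :=
  exists t, filled e C t = [set: V].

Definition prop_time_is (V : finType) (e : rel V) (C : {set V}) (k : nat) : Prop :=
  filled e C k = [set: V] /\ forall t, filled e C t = [set: V] -> (k <= t)%N.

(* A zero forcing game in Z(G,T) with initial set C:
   Cf t = C^(t) (vertices forced at step t), Cb t = C^[t] the union of Cf 0..t,
   forcer v = the unique vertex u with the force u -> v in phi(C). *)
Definition game_in_Z (V : finType) (e : rel V) (T : nat) (C : {set V}) : Prop :=
  zero_forcing_set e C /\
  exists (Cf : nat -> {set V}) (forcer : V -> V),
    let Cb := fun t => \bigcup_(s < t.+1) Cf s in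
    Cf 0 = C /\
        (forall v, exists t, v \in Cf t) /\
        (forall v t1 t2, v \in Cf t1 -> v \in Cf t2 -> t1 = t2) /\
        (forall t v, (1 <= t)%N -> v \in Cf t ->
            [/\ e (forcer v) v, forcer v \in Cb t.-1 &
                forall w, w \in nbhd e (forcer v) -> w != v -> w \in Cb t.-1]) /\
        (forall t, (1 <= t)%N -> Cf t = forced_step e (Cb t.-1)) /\
        (forall t, (T < t)%N -> Cf t = set0).

Local Open Scope ring_scope.

(* Feasibility for TSM(G,T). Binary variables are booleans, read as 0/1 in rat.
   x t v (t in 0..T), y t u v for the arc (u,v) (t in [T]), z t (t in [T]). *)
Definition TSM_feasible (V : finType) (e : rel V) (T : nat)
    (x : nat -> V -> bool) (y : nat -> V -> V -> bool) (z : nat -> bool) : Prop :=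
  let X t v : rat := (x t v)%:R in
  let Y t u v : rat := (y t u v)%:R in
  let Z t : rat := (z t)%:R in
  let n : rat := #|V|%:R in
  (* (1) *)
      (forall v, X 0%N v + \sum_(1 <= t < T.+1) \sum_(u | e u v) Y t u v = 1) /\
      (* (2) *)
      (forall u v t, e u v -> (1 <= t <= T)%N -> Y t u v <= X t.-1 u) /\
      (* (3) *)
      (forall u v w t, e u v -> w \in nbhd e u -> w != v -> (1 <= t <= T)%N ->
          Y t u v <= X t.-1 w) /\
      (* (4) *)
      (forall v t, (1 <= t <= T)%N ->
          X t v = X t.-1 v + \sum_(u | e u v) Y t u v) /\
      (* (5) *)
      (forall u v t, e u v -> (1 <= t <= T)%N ->
          X t.-1 u - X t.-1 v + \sum_(w in nbhd e u | w != v) X t.-1 w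
            <= \sum_(w | e w v) Y t w v + (deg e u)%:R - 1) /\
      (* (6) *)
      (forall t, (1 <= t <= T)%N ->
          n^-1 * \sum_(v : V) (X t v - X t.-1 v) - Z t <= 0) /\
      (* (7) *)
      (forall t, (1 <= t <= T)%N -> Z t - \sum_(v : V) (X t v - X t.-1 v) <= 0).

(* Main.v *)
Require Import Defs.
From mathcomp Require Import all_boot all_order all_algebra.
From mathcomp Require Import zify ring lra.
Import Order.TTheory GRing.Theory Num.Theory.

Theorem theorem4p2 (V : finType) (e : rel V) (T : nat)
    (x : nat -> V -> bool) (y : nat -> V -> V -> bool) (z : nat -> bool) :
  simple_graph e -> (1 <= T)%N -> TSM_feasible e T x y z ->
  let C := [set v | x 0%N v] in
  [/\ zero_forcing_set e C, game_in_Z e T C &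
      prop_time_is e C (\sum_(1 <= t < T.+1) (z t : nat))%N].
Proof.
Local Open Scope ring_scope.
move=> _ T1 [H1 [H2 [H3 [H4 [H5 [H6 H7]]]]]] C.
have b01 : forall b : bool, (b%:R : rat) = if b then 1 else 0 by case.
have sumY0 : forall t v, 0 <= \sum_(u | e u v) ((y t u v)%:R : rat).
  by move=> t v; apply: sumr_ge0 => u _; rewrite ler0n.
have posY : forall t v, (0 < \sum_(u | e u v) ((y t u v)%:R : rat)) -> exists u, e u v && y t u v.
  move=> t v Hp; case: (pickP (fun u => e u v && y t u v)) => [u Hu|Hn]; first by exists u.
  move: Hp; rewrite big1 ?ltxx // => u eu; move: (Hn u); rewrite eu /=; by move->.
have geY : forall t u v, e u v -> y t u v -> 1 <= \sum_(w | e w v) ((y t w v)%:R : rat).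
  move=> t u v euv yv; rewrite (bigD1 u) //= yv lerDl; apply: sumr_ge0 => w _; by rewrite ler0n.
have Fa : forall t v, (1 <= t <= T)%N -> x t.-1 v -> x t v.
  move=> t v Ht xv; have := H4 v t Ht; rewrite xv /=.
  case: (x t v) => //= h.
  have := sumY0 t v. move: h. rewrite /=. lra.
have Fc : forall t u v, (1 <= t <= T)%N -> e u v -> y t u v -> ~~ x t.-1 v && x t v.
  move=> t u v Ht euv yv; have := H4 v t Ht; have := geY t u v euv yv.
  case: (x t v); case: (x t.-1 v) => //=; lra.
have Fb : forall t v, (1 <= t <= T)%N -> x t v -> ~~ x t.-1 v -> exists u, e u v && y t u v.
  move=> t v Ht xv xv'; apply: posY; have := H4 v t Ht; rewrite xv (negbTE xv') /=; lra.
have F2 : forall t u v, (1 <= t <= T)%N -> e u v -> y t u v -> x t.-1 u.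
  move=> t u v Ht euv yv; have := H2 u v t euv Ht; rewrite yv; case: (x t.-1 u) => //=; lra.
have F3 : forall t u v w, (1 <= t <= T)%N -> e u v -> y t u v -> w \in nbhd e u -> w != v -> x t.-1 w.
  move=> t u v w Ht euv yv wn wv; have := H3 u v w t euv wn wv Ht; rewrite yv; case: (x t.-1 w) => //=; lra.
have F5 : forall t u v, (1 <= t <= T)%N -> e u v -> x t.-1 u -> ~~ x t.-1 v ->
   (forall w, w \in nbhd e u -> w != v -> x t.-1 w) -> exists w, e w v && y t w v.
  move=> t u v Ht euv xu xv Hw; apply: posY.
  have := H5 u v t euv Ht; rewrite xu (negbTE xv).
  have -> : \sum_(w in nbhd e u | w != v) ((x t.-1 w)%:R : rat) = \sum_(w in nbhd e u | w != v) 1.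
    by apply: eq_bigr => w /andP [wn wv]; rewrite Hw.
  have -> : ((deg e u)%:R : rat) = \sum_(w in nbhd e u) 1 by rewrite sumr_const.
  rewrite [X in _ <= _ + X - _](bigD1 v) /=; last by rewrite /nbhd inE.
  lra.
have XF : forall t, (t <= T)%N -> forall v, (v \in filled e C t) = x t v.
  elim=> [|t IH] Ht v; first by rewrite /= inE.
  have Ht' : (1 <= t.+1 <= T)%N by [].
  have IH' := IH (ltnW Ht).
  rewrite /= in_setU /forced_step inE IH'.
  apply/idP/idP.
  - case/orP => [xv|/existsP [u]]; first exact: (Fa t.+1 v Ht' xv).
    rewrite /can_force => /and4P [uS euv vS /forallP Hw]; rewrite IH' in uS; rewrite IH' in vS.
    have [w /andP [ewv ywv]] : exists w, e w v && y t.+1 w v.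
      apply: (F5 t.+1 u v Ht' euv uS vS) => w wn wv.
      by have := Hw w; rewrite wn wv /= IH'.
    by case/andP: (Fc t.+1 w v Ht' ewv ywv).
  - move=> xv; case xv': (x t v) => //=.
    have [u /andP [euv yuv]] := Fb t.+1 v Ht' xv (negbT xv').
    apply/existsP; exists u; rewrite /can_force !IH' euv xv' /=.
    rewrite (F2 t.+1 u v Ht' euv yuv) /=; apply/forallP => w; apply/implyP => /andP [wn wv].
    by rewrite IH'; exact: (F3 t.+1 u v w Ht' euv yuv wn wv).
have XT : forall v, x T v.
  move=> v.
  have Xs : forall t, (t <= T)%N -> ((x t v)%:R : rat) = (x 0%N v)%:R + \sum_(1 <= s < t.+1) \sum_(u | e u v) ((y s u v)%:R : rat).
    elim=> [|t IH] Ht; first by rewrite big_geq // addr0.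
    rewrite big_nat_recr //= addrA -IH ?(ltnW Ht) //; exact: H4.
  have := Xs T (leqnn T); rewrite H1; case: (x T v) => //= h; exfalso; move: h; apply/eqP; by rewrite eq_sym oner_eq0.
have FT : filled e C T = setT.
  by apply/setP => v; rewrite in_setT XF ?XT.
have mono : forall s k, filled e C s \subset filled e C (s + k).
  move=> s; elim=> [|k IH]; first by rewrite addn0.
  by rewrite addnS /=; apply: subset_trans IH _; apply: subsetUl.
have mono' : forall s t, (s <= t)%N -> filled e C s \subset filled e C t.
  by move=> s t st; rewrite -(subnKC st); apply: mono.
have stab : forall t, filled e C t = filled e C t.+1 -> forall k, filled e C (t + k) = filled e C t.
  move=> t Ht; elim=> [|k IH]; first by rewrite addn0.
  by rewrite addnS /= IH.
have fsT : forced_step e setT = set0.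
  apply/setP => v; rewrite !inE; apply/existsP => [[u]].
  by rewrite /can_force in_setT /= => /and3P [_ ]; rewrite in_setT.
have FV : forall t, (T <= t)%N -> filled e C t = setT.
  by move=> t Tt; apply/eqP; rewrite eqEsubset subsetT -FT mono'.
have Zf : forall t, (1 <= t <= T)%N -> z t = (filled e C t != filled e C t.-1).
  move=> t Ht; have tT : (t <= T)%N by case/andP: Ht.
  have t1T : (t.-1 <= T)%N by apply: leq_trans tT; apply: leq_pred.
  have nn : forall v, 0 <= ((x t v)%:R : rat) - (x t.-1 v)%:R.
    move=> v; case e1: (x t.-1 v); first by rewrite (Fa t v Ht e1) subrr.
    by rewrite subr0 ler0n.
  case zt: (z t).
  - symmetry; apply/negP => /eqP Heq; have := H7 t Ht; rewrite zt big1 ?subr0 ?ler10 // => v _.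
    by rewrite -!XF // Heq subrr.
  - symmetry; apply/negbTE; rewrite negbK; apply/eqP/setP => v; rewrite !XF //.
    case e1: (x t.-1 v); first by rewrite (Fa t v Ht e1).
    case e2: (x t v) => //; exfalso.
    have n0 : (0 < #|V|)%N by apply/card_gt0P; exists v.
    have s1 : 1 <= \sum_(w : V) (((x t w)%:R : rat) - (x t.-1 w)%:R).
      rewrite (bigD1 v) //= e1 e2 /= subr0 lerDl; exact: sumr_ge0.
    have : 0 < (#|V|%:R : rat)^-1 * \sum_(w : V) (((x t w)%:R : rat) - (x t.-1 w)%:R).
      apply: mulr_gt0; first by rewrite invr_gt0 ltr0n.
      by apply: lt_le_trans s1.
    have := H6 t Ht; rewrite zt /=; lra.
have exT : exists t, filled e C t == setT by exists T; rewrite FT.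
case: (ex_minnP exT) => m /eqP Fm Hmin.
have mT : (m <= T)%N by apply: Hmin; rewrite FT.
have Zm : forall t, (1 <= t <= T)%N -> z t = (t <= m)%N.
  move=> t Ht; rewrite Zf //; case/andP: Ht => t1 tT.
  case: (leqP t m) => tm.
  - apply/negP => /eqP Heq.
    have := stab t.-1; rewrite prednK // => /(_ (esym Heq) (m - t.-1)%N).
    rewrite subnKC; last by apply: leq_trans tm; apply: leq_pred.
    rewrite Fm => /esym /eqP /Hmin; rewrite -ltnS prednK //; lia.
  - apply/negbTE; rewrite negbK; apply/eqP.
    have h1 : forall s, (m <= s)%N -> filled e C s = setT.
      by move=> s ms; apply/eqP; rewrite eqEsubset subsetT -Fm mono'.
    rewrite !h1 //; lia.
have sumz : (\sum_(1 <= t < T.+1) (z t : nat))%N = m.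
  rewrite (eq_big_nat _ _ (F2 := fun t => (t <= m)%N : nat)); last by move=> i Hi; rewrite Zm.
  rewrite (big_cat_nat _ (n := m.+1)) //=.
  rewrite (eq_big_nat _ _ (F2 := fun t => 1%N)); last by move=> i Hi; have -> : (i <= m)%N by lia.
  rewrite [X in (_ + X)%N](eq_big_nat _ _ (F2 := fun t => 0%N)); last by move=> i Hi; have -> : (i <= m)%N = false by lia.
  rewrite !sum_nat_const_nat; lia.
have ptC : prop_time_is e C (\sum_(1 <= t < T.+1) (z t : nat))%N.
  rewrite sumz; split => // t Ht; apply: Hmin; by rewrite Ht.
have zfs : zero_forcing_set e C by exists T.
split => //.
split => //.
pose Cf := fun t : nat => if t is 0 then C else forced_step e (filled e C t.-1).
have CfF : forall t v, v \in Cf t -> v \in filled e C t /\ ((0 < t)%N -> v \notin filled e C t.-1).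
  move=> [|t] v /=; first by [].
  rewrite /forced_step inE => /existsP [u] /and4P [uS euv vn Hw].
  split; last by [].
  by rewrite in_setU; apply/orP; right; rewrite inE; apply/existsP; exists u; rewrite /can_force uS euv vn Hw.
have Cfu : forall v t1 t2, v \in Cf t1 -> v \in Cf t2 -> t1 = t2.
  have aux : forall v t1 t2, (t1 < t2)%N -> v \in Cf t1 -> v \in Cf t2 -> False.
    move=> v t1 t2 lt12 /CfF [h1 _] /CfF [_ /(_ (leq_ltn_trans (leq0n _) lt12))].
    by move/negP; apply; apply: (subsetP (mono' t1 t2.-1 _)) => //; rewrite -ltnS prednK //; lia.
  move=> v t1 t2 h1 h2; case: (ltngtP t1 t2) => // lt.
  - by case: (aux v t1 t2 lt h1 h2).
  - by case: (aux v t2 t1 lt h2 h1).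
have CfT : forall t, (T < t)%N -> Cf t = set0.
  move=> [|t] //= Tt; rewrite FV //.
have CbF : forall t, \bigcup_(s < t.+1) Cf s = filled e C t.
  elim=> [|t IH]; first by rewrite big_ord1.
  by rewrite big_ord_recr /= IH.
have exs : forall t v, v \in filled e C t -> exists s, v \in Cf s.
  elim=> [|t IH] v; first by exists 0%N.
  rewrite /= in_setU => /orP [/IH //|h]; by exists t.+1.
exists Cf, (fun v => odflt v [pick u | [exists s : 'I_T, can_force e (filled e C s) u v]]).
rewrite /=; split => //; split.
  move=> v; apply: (exs T); by rewrite FT.
split; first exact: Cfu.
split.
  move=> t v t1 vt; rewrite CbF.
  case: (leqP t T) => tT; last by rewrite CfT // inE in vt.
  case: t t1 vt tT => // t _ vt tT /=.
  move: (vt); rewrite /= /forced_step inE => /existsP [u0 cf0].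
  case: pickP => [u /existsP [s cf] | H] /=.
  - have : v \in Cf (val s).+1 by rewrite /= /forced_step inE; apply/existsP; exists u.
    move/(Cfu _ _ _ vt) => [st]; rewrite -st in cf.
    case/and4P: cf => uS euv _ /forallP Hw; split => // w wn wv.
    by have := Hw w; rewrite wn wv.
  - exfalso; move: (H u0) => /= /negbT /existsPn /(_ (Ordinal tT)); by rewrite cf0.
split.
  move=> t t1; rewrite CbF; by case: t t1.
exact: CfT.
Qed.
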